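(* Let $P$ be the uniform distribution on $[0,1]$, let $\beta=\{\frac14,\frac12\}$, and let $V_n$ ($n\geq2$) be the $n$th conditional quantization error of $P$ with respect to $\beta$, with $V_\infty=\lim_{n\to\infty}V_n$. Then the $1$-dimensional conditional quantization coefficient exists as a finite positive number and equals $\frac1{12}$, i.e. $\lim_{n\to\infty}n^2(V_n-V_\infty)=\frac1{12}$.
   Context: For a Borel probability measure $P$ on $\mathbb{R}$ and a finite set $\beta\subset\mathbb{R}$ with $\mathrm{card}(\beta)=r$, for $n\geq r$ the $n$th conditional quantization error is $V_n=\inf\{\int\min_{a\in\alpha\cup\beta}(x-a)^2\,dP(x):\alpha\subset\mathbb{R},\ \mathrm{card}(\alpha)\leq n-r\}$. *)

(* Defs.v *)
From Stdlib Require Import Reals Lra List.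
From Coquelicot Require Import Coquelicot.
Open Scope R_scope.

Definition min_sqdist (x b0 : R) (l : list R) : R :=
  fold_right (fun a m => Rmin ((x - a) ^ 2) m) ((x - b0) ^ 2) l.

(* Expectation with respect to the uniform distribution P on [0,1]
   (the integrands used below are continuous, so the Riemann integral
   coincides with the Lebesgue integral w.r.t. P). *)
Definition unif01_expect (f : R -> R) : R := RInt f 0 1.

Definition beta_list : list R := 1/4 :: 1/2 :: nil.

Definition cond_cost (alpha : list R) : R :=
  unif01_expect (fun x => min_sqdist x (1/4) (alpha ++ (1/2 :: nil))).

(* n-th conditional quantization error: infimum over alpha with
   card(alpha) <= n - r (a finite set with at most k points is the set of
   elements of a list of length <= k). *)
Definition Vn (n : nat) : R :=
  real (Glb_Rbar (fun v => exists alpha : list R,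
                    (length alpha <= n - length beta_list)%nat /\ v = cond_cost alpha)).

(* Main.v *)
Require Import Defs.
From Stdlib Require Import Reals Lra List Psatz.
From Coquelicot Require Import Coquelicot.
Open Scope R_scope.

Lemma Rmin_alt u v : Rmin u v = (u + v - Rabs (u - v)) / 2.
Proof. unfold Rmin; destruct (Rle_dec u v); [rewrite Rabs_left1 by lra | rewrite Rabs_right by lra]; lra. Qed.

Lemma cont_Rmin (f g : R -> R) x : continuous f x -> continuous g x ->
  continuous (fun y => Rmin (f y) (g y)) x.
Proof.
  intros Hf Hg.
  apply continuous_ext with (f := fun y => mult (/2) (minus (plus (f y) (g y)) (Rabs (minus (f y) (g y))))).
  { intros y. rewrite Rmin_alt. unfold minus, plus, opp, mult; simpl. unfold Rdiv, Rminus; apply Rmult_comm. }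
  apply (@continuous_mult R_UniformSpace R_AbsRing). apply continuous_const.
  apply (@continuous_minus R_UniformSpace R_AbsRing R_NormedModule).
  apply (@continuous_plus R_UniformSpace R_AbsRing R_NormedModule); auto.
  apply continuous_Rabs_comp. apply (@continuous_minus R_UniformSpace R_AbsRing R_NormedModule); auto.
Qed.

Lemma cont_sq a x : continuous (fun y => (y-a)^2) x.
Proof. apply (@ex_derive_continuous R_AbsRing R_NormedModule). auto_derive. auto. Qed.

Lemma RInt_sq a c d : RInt (fun x => (x-a)^2) c d = ((d-a)^3 - (c-a)^3)/3.
Proof.
  apply is_RInt_unique.
  replace (((d-a)^3 - (c-a)^3)/3) with (minus ((fun x => (x-a)^3/3) d) ((fun x => (x-a)^3/3) c)).
  2:{ unfold minus, plus, opp; simpl. field. }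
  apply (@is_RInt_derive R_CompleteNormedModule (fun x => (x-a)^3/3)).
  - intros x _. auto_derive; auto. field.
  - intros x _. apply cont_sq.
Qed.

Lemma msd_le x b0 l y : In y (b0::l) -> min_sqdist x b0 l <= (x-y)^2.
Proof.
  induction l as [|a l IH]; unfold min_sqdist in *; simpl in *.
  - intros [H|H]; [subst; lra | tauto].
  - intros [H|[H|H]].
    + eapply Rle_trans; [apply Rmin_r|]. apply IH; auto.
    + subst. apply Rmin_l.
    + eapply Rle_trans; [apply Rmin_r|]. apply IH; auto.
Qed.

Lemma msd_ex x b0 l : exists y, In y (b0::l) /\ min_sqdist x b0 l = (x-y)^2.
Proof.
  induction l as [|a l IH]; unfold min_sqdist in *; simpl in *.
  - exists b0; auto.
  - destruct IH as [y [Hy E]]. unfold Rmin. destruct (Rle_dec _ _).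
    + exists a; auto.
    + exists y; split; [destruct Hy; auto|]; auto.
Qed.

Lemma cont_msd b0 l x : continuous (fun y => min_sqdist y b0 l) x.
Proof.
  induction l as [|a l IH]; unfold min_sqdist in *; simpl.
  - apply cont_sq.
  - apply (cont_Rmin (fun y => (y-a)^2)); auto. apply cont_sq.
Qed.

Lemma exR b0 l a b : ex_RInt (fun y => min_sqdist y b0 l) a b.
Proof. apply (@ex_RInt_continuous R_CompleteNormedModule). intros; apply cont_msd. Qed.

Lemma exRsq a c d : ex_RInt (fun y => (y-a)^2) c d.
Proof. apply (@ex_RInt_continuous R_CompleteNormedModule). intros; apply cont_sq. Qed.

Lemma list_max (l : list R) b0 : exists a, In a (b0::l) /\ forall y, In y (b0::l) -> y <= a.
Proof.
  induction l as [|z l IH].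
  - exists b0; split; [left; auto|]. intros y [H|H]; [subst; lra|destruct H].
  - destruct IH as [m [Hm Hle]]. destruct (Rle_dec m z).
    + exists z; split; [right; left; auto|]. intros y [H|[H|H]]; subst; try lra.
      * specialize (Hle y (or_introl eq_refl)); lra.
      * specialize (Hle y (or_intror H)); lra.
    + exists m; split; [destruct Hm; [left; auto| right; right; auto]|].
      intros y [H|[H|H]]; subst; try lra.
      * apply Hle; left; auto.
      * apply Hle; right; auto.
Qed.

Lemma list_rem (L : list R) a : In a L -> exists L', length L' = pred (length L) /\
  (forall y, In y L' -> In y L) /\ (forall y, In y L -> y = a \/ In y L').
Proof.
  intros H. destruct (in_split a L H) as [l1 [l2 E]]. subst L.
  exists (l1 ++ l2). rewrite !length_app. simpl. split; [lia|]. split.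
  - intros y Hy. apply in_app_iff in Hy. apply in_app_iff. simpl. tauto.
  - intros y Hy. apply in_app_iff in Hy. simpl in Hy. rewrite in_app_iff. intuition.
Qed.

Lemma poly_ineq u v K : 0 <= u -> 0 <= v -> 1 <= K ->
  u^3/(12*K^2) + v^3/12 >= (u+v)^3/(12*(K+1)^2).
Proof.
  intros Hu Hv HK.
  assert (D : (K+1)^2*u^3 + K^2*(K+1)^2*v^3 - K^2*(u+v)^3 = (u - K*v)^2 * ((2*K+1)*u + (K^2+2*K)*v)) by ring.
  assert (P : 0 <= (u - K*v)^2 * ((2*K+1)*u + (K^2+2*K)*v)).
  { apply Rmult_le_pos; [apply pow2_ge_0| nra]. }
  assert (0 < K^2) by nra. assert (0 < (K+1)^2) by nra.
  apply Rle_ge.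
  apply Rmult_le_reg_r with (r := 12*K^2*(K+1)^2). nra.
  replace ((u+v)^3/(12*(K+1)^2) * (12*K^2*(K+1)^2)) with (K^2*(u+v)^3) by (field; lra).
  replace ((u^3/(12*K^2) + v^3/12) * (12*K^2*(K+1)^2)) with ((K+1)^2*u^3 + K^2*(K+1)^2*v^3) by (field; lra).
  lra.
Qed.

Lemma sq_lb a c d : c <= d -> RInt (fun x => (x-a)^2) c d >= (d-c)^3/12.
Proof.
  intros H. rewrite RInt_sq.
  assert (E : 4*((d-a)^3 - (c-a)^3) - (d-c)^3 = 3*(d-c)*((d-a)+(c-a))^2) by ring.
  assert (0 <= 3*(d-c)*((d-a)+(c-a))^2) by (apply Rmult_le_pos; [lra|apply pow2_ge_0]).
  lra.
Qed.

Lemma lower N : forall b0 l, length l = N -> forall c d, c <= d ->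
  RInt (fun x => min_sqdist x b0 l) c d >= (d-c)^3/(12*(INR N + 1)^2).
Proof.
  induction N as [|N IH]; intros b0 l Hl c d Hcd.
  - destruct l; [|simpl in Hl; discriminate].
    simpl INR. replace ((0+1)^2) with 1 by ring. rewrite Rmult_1_r.
    apply (sq_lb b0 c d Hcd).
  - destruct (list_max l b0) as [a [Ha Hamax]].
    destruct (list_rem (b0::l) a Ha) as [L' [HL' [Hsub Hcov]]].
    destruct L' as [|b0' l']; [simpl in HL'; rewrite Hl in HL'; discriminate|].
    simpl in HL'. rewrite Hl in HL'. injection HL' as HL'.
    destruct (list_max l' b0') as [b [Hb Hbmax]].
    assert (Hba : b <= a) by (apply Hamax; apply Hsub; auto).
    set (m' := Rmax c (Rmin ((a+b)/2) d)).
    assert (Hm1 : c <= m') by apply Rmax_l.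
    assert (Hm2 : m' <= d) by (apply Rmax_lub; [lra| apply Rmin_r]).
    assert (Hm3 : c < m' -> m' <= (a+b)/2).
    { unfold m', Rmax. destruct (Rle_dec _ _); intro; [apply Rmin_l| lra]. }
    assert (Hm4 : m' < d -> (a+b)/2 <= m').
    { unfold m', Rmax, Rmin. destruct (Rle_dec ((a+b)/2) d); destruct (Rle_dec _ _); intro; lra. }
    assert (Ch := RInt_Chasles (fun x => min_sqdist x b0 l) c m' d (exR _ _ _ _) (exR _ _ _ _)).
    unfold plus in Ch; simpl in Ch.
    assert (H1 : RInt (fun x => min_sqdist x b0' l') c m' <= RInt (fun x => min_sqdist x b0 l) c m').
    { apply RInt_le; auto using exR. intros x [Hx1 Hx2].
      assert (Hx : x <= (a+b)/2) by (specialize (Hm3 ltac:(lra)); lra).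
      destruct (msd_ex x b0 l) as [e [He E]]. rewrite E.
      destruct (Hcov e He) as [->|He'].
      - eapply Rle_trans; [apply (msd_le x b0' l' b Hb)|]. nra.
      - apply msd_le; auto. }
    assert (H2 : RInt (fun x => (x-a)^2) m' d <= RInt (fun x => min_sqdist x b0 l) m' d).
    { apply RInt_le; auto using exR, exRsq. intros x [Hx1 Hx2].
      assert (Hx : (a+b)/2 <= x) by (specialize (Hm4 ltac:(lra)); lra).
      destruct (msd_ex x b0 l) as [e [He E]]. rewrite E.
      assert (Hea : e <= a) by (apply Hamax; auto).
      destruct (Hcov e He) as [->|He']; [lra|].
      assert (Heb : e <= b) by (apply Hbmax; auto). nra. }
    assert (H3 := IH b0' l' HL' c m' Hm1).
    assert (H4 := sq_lb a m' d Hm2).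
    assert (HK : 1 <= INR N + 1) by (generalize (pos_INR N); lra).
    assert (P := poly_ineq (m'-c) (d-m') (INR N + 1) ltac:(lra) ltac:(lra) HK).
    rewrite S_INR. replace (d-c) with ((m'-c)+(d-m')) by ring.
    replace (INR N + 1 + 1) with ((INR N + 1) + 1) by ring.
    lra.
Qed.

Lemma mid_bound a c d b0 l : c <= d -> In a (b0::l) ->
  RInt (fun x => min_sqdist x b0 l) c d <= ((d-a)^3 - (c-a)^3)/3.
Proof.
  intros H Ha. rewrite <- RInt_sq. apply RInt_le; auto using exR, exRsq.
  intros x _. apply msd_le; auto.
Qed.

Lemma upper k : forall c d, c <= d -> exists l0, length l0 = S k /\
  forall b0 l, (forall y, In y l0 -> In y (b0::l)) ->
  RInt (fun x => min_sqdist x b0 l) c d <= (d-c)^3/(12*(INR k + 1)^2).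
Proof.
  induction k as [|k IH]; intros c d Hcd.
  - exists ((c+d)/2 :: nil). split; auto. intros b0 l Hin.
    eapply Rle_trans; [apply (mid_bound ((c+d)/2)); auto; apply Hin; left; auto|].
    simpl INR. right. field.
  - set (K := INR k + 1).
    assert (HK : 1 <= K) by (unfold K; generalize (pos_INR k); lra).
    set (h := (d-c)/(K+1)).
    assert (Hh : 0 <= h) by (unfold h; apply Rdiv_le_0_compat; lra).
    assert (Hdc : d - c = (K+1)*h) by (unfold h; field; lra).
    destruct (IH (c+h) d ltac:(nra)) as [l1 [Hl1 Hb1]].
    exists ((c+h/2) :: l1). split; [simpl; auto|].
    intros b0 l Hin.
    rewrite <- (RInt_Chasles (fun x => min_sqdist x b0 l) c (c+h) d (exR _ _ _ _) (exR _ _ _ _)).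
    unfold plus; cbn -[INR pow RInt].
    assert (A1 := mid_bound (c+h/2) c (c+h) b0 l ltac:(lra) ltac:(apply Hin; left; auto)).
    assert (A2 := Hb1 b0 l ltac:(intros y Hy; apply Hin; right; auto)).
    fold K in A2.
    replace (d - (c+h)) with (K*h) in A2 by lra.
    replace (((c + h - (c + h / 2)) ^ 3 - (c - (c + h / 2)) ^ 3) / 3) with (h^3/12) in A1 by field.
    replace ((K*h)^3/(12*K^2)) with (K*h^3/12) in A2 by (field; lra).
    rewrite S_INR. fold K. rewrite Hdc.
    replace (((K+1)*h)^3/(12*(K+1)^2)) with ((K+1)*h^3/12) by (field; lra).
    lra.
Qed.

Lemma glb_between (E : R -> Prop) B v : E v -> (forall x, E x -> B <= x) ->
  B <= real (Glb_Rbar E) /\ (forall w, E w -> real (Glb_Rbar E) <= w).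
Proof.
  intros Hv HB. destruct (Glb_Rbar_correct E) as [Hlb Hgr].
  assert (H1 : Rbar_le B (Glb_Rbar E)) by (apply Hgr; intros x Hx; apply HB; auto).
  assert (H2 := Hlb v Hv).
  destruct (Glb_Rbar E) as [r| |]; simpl in *; [|tauto|tauto].
  split; auto.
Qed.

Lemma Vn_bounds n : (2 <= n)%nat ->
  1/(12*(INR n)^2) <= Vn n /\ ((3 <= n)%nat -> Vn n <= 1/(12*(INR n - 2)^2)).
Proof.
  intros Hn. unfold Vn.
  assert (Hx : 2 <= INR n) by (apply (le_INR 2); auto).
  destruct (glb_between (fun v => exists alpha : list R,
      (length alpha <= n - length beta_list)%nat /\ v = cond_cost alpha)
      (1/(12*(INR n)^2)) (cond_cost nil)) as [HL HU].
  - exists nil. simpl. split; auto. lia.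
  - intros x [alpha [Ha ->]]. simpl in Ha.
    unfold cond_cost, unif01_expect.
    assert (Hlo := lower (length (alpha ++ 1/2 :: nil)) (1/4) (alpha ++ 1/2 :: nil) eq_refl 0 1 ltac:(lra)).
    rewrite length_app in Hlo. simpl length in Hlo.
    assert (Hle : INR (length alpha + 1) + 1 <= INR n).
    { rewrite <- S_INR. apply le_INR. lia. }
    assert (0 < INR (length alpha + 1) + 1) by (generalize (pos_INR (length alpha + 1)); lra).
    apply Rge_le in Hlo. eapply Rle_trans; [|apply Hlo].
    replace ((1-0)^3) with 1 by ring.
    unfold Rdiv. rewrite !Rmult_1_l. apply Rinv_le_contravar. nra.
    apply Rmult_le_compat_l; [lra|]. nra.
  - split; [exact HL|]. intros H3.
    destruct (upper (n-3) 0 1 ltac:(lra)) as [l0 [Hl0 Hb]].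
    eapply Rle_trans; [apply (HU (cond_cost l0))|].
    + exists l0. split; auto. simpl. lia.
    + unfold cond_cost, unif01_expect.
      eapply Rle_trans; [apply Hb|].
      * intros y Hy. right. apply in_app_iff. left; auto.
      * replace (INR (n-3) + 1) with (INR n - 2). replace ((1-0)^3) with 1 by ring. lra.
        rewrite minus_INR by auto. simpl. lra.
Qed.

Lemma lim_inv : is_lim_seq (fun n => / INR n) 0.
Proof.
  assert (H := is_lim_seq_inv INR p_infty is_lim_seq_INR ltac:(discriminate)).
  simpl in H. exact H.
Qed.

Lemma Vn_lim : is_lim_seq Vn 0.
Proof.
  apply is_lim_seq_le_le_loc with (u := fun _ => 0) (w := fun n => / INR n).
  - exists 3%nat. intros n Hn.
    destruct (Vn_bounds n ltac:(lia)) as [L U].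
    assert (Hx : 3 <= INR n) by (replace 3 with (INR 3) by (simpl; lra); apply le_INR; auto).
    specialize (U Hn). split.
    + eapply Rle_trans; [|apply L]. apply Rlt_le. apply Rdiv_lt_0_compat; nra.
    + eapply Rle_trans; [apply U|].
      assert (K : / INR n - 1/(12*(INR n - 2)^2) = (12*(INR n - 2)^2 - INR n)/(12*INR n*(INR n - 2)^2)) by (field; repeat split; lra).
      assert (0 <= (12*(INR n - 2)^2 - INR n)/(12*INR n*(INR n - 2)^2)).
      { apply Rdiv_le_0_compat.
        - assert (0 <= (INR n - 3)*(12*INR n - 13)) by (apply Rmult_le_pos; lra). nra.
        - apply Rmult_lt_0_compat; [lra| apply pow_lt; lra]. }
      lra.
  - apply is_lim_seq_const.
  - apply lim_inv.
Qed.

Theorem theorem3p12 :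
  ex_finite_lim_seq Vn /\
  is_lim_seq (fun n => (INR n) ^ 2 * (Vn n - real (Lim_seq Vn))) (1 / 12).
Proof.
  split; [exists 0; apply Vn_lim|].
  rewrite (is_lim_seq_unique _ _ Vn_lim). simpl real.
  apply is_lim_seq_le_le_loc with (u := fun _ => 1/12) (w := fun n => 1/12 + / INR n).
  - exists 4%nat. intros n Hn.
    destruct (Vn_bounds n ltac:(lia)) as [L U].
    assert (Hx : 4 <= INR n) by (replace 4 with (INR 4) by (simpl; lra); apply le_INR; auto).
    specialize (U ltac:(lia)). rewrite Rminus_0_r. split.
    + replace (1/12) with (INR n ^2 * (1/(12*INR n^2))) by (field; repeat split; lra).
      apply Rmult_le_compat_l; [nra|auto].
    + eapply Rle_trans; [apply Rmult_le_compat_l; [nra|apply U]|].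
      assert (K : 1/12 + / INR n - INR n^2 * (1/(12*(INR n - 2)^2)) = 4*(2*INR n - 3)*(INR n - 4)/(12*INR n*(INR n - 2)^2)) by (field; repeat split; lra).
      assert (0 <= 4*(2*INR n - 3)*(INR n - 4)/(12*INR n*(INR n - 2)^2)).
      { apply Rdiv_le_0_compat.
        - assert (0 <= (2*INR n - 3)*(INR n - 4)) by (apply Rmult_le_pos; lra). lra.
        - apply Rmult_lt_0_compat; [lra| apply pow_lt; lra]. }
      lra.
  - apply is_lim_seq_const.
  - replace (Finite (1/12)) with (Finite (1/12 + 0)) by (f_equal; ring).
    apply is_lim_seq_plus'; [apply is_lim_seq_const|apply lim_inv].
Qed.
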